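(* Let $N,M$ be normal subgroups of a group $G$, with $N$ abelian of finite exponent. (i) If $\exp(N)$ is odd, then $\exp(N\otimes M)$ divides $\exp(N)$. (ii) If $\exp(N)$ is even, then $\exp(N\otimes M)$ divides $2\exp(N)$.
   Context: Conventions: ${}^g h = ghg^{-1}$. For normal subgroups $N,M$ of $G$ acting on each other by conjugation, $N\otimes M$ is the group generated by symbols $n\otimes m$ ($n\in N$, $m\in M$) subject to $nn'\otimes m=({}^n n'\otimes {}^n m)(n\otimes m)$ and $n\otimes mm'=(n\otimes m)({}^m n\otimes {}^m m')$. *)

(* Defs.v *)
From Stdlib Require Import Arith List.
Import ListNotations.
Set Implicit Arguments.

Record group := Group {
  carrier :> Type;
  gmul : carrier -> carrier -> carrier;
  gone : carrier;
  ginv : carrier -> carrier;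
  gmulA : forall x y z, gmul x (gmul y z) = gmul (gmul x y) z;
  gmul1 : forall x, gmul gone x = x;
  gmulV : forall x, gmul (ginv x) x = gone
}.

Arguments gmul {g} _ _.
Arguments gone g : clear implicits.
Arguments ginv {g} _.

Section Groups.
Context {G : group}.

Definition conj (g h : G) : G := gmul (gmul g h) (ginv g).

Fixpoint gpow (x : G) (k : nat) : G :=
  match k with 0 => gone G | S k => gmul x (gpow x k) end.

Definition subgroup (H : G -> Prop) : Prop :=
  H (gone G) /\ (forall x y, H x -> H y -> H (gmul x y)) /\
  (forall x, H x -> H (ginv x)).

Definition normal (H : G -> Prop) : Prop :=
  subgroup H /\ forall g h, H h -> H (conj g h).

Definition abelian (H : G -> Prop) : Prop :=
  forall x y, H x -> H y -> gmul x y = gmul y x.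

Definition kills (H : G -> Prop) (k : nat) : Prop :=
  forall x, H x -> gpow x k = gone G.
Definition exponent (H : G -> Prop) (e : nat) : Prop :=
  0 < e /\ kills H e /\ forall k, 0 < k -> kills H k -> e <= k.

(* Words in the free group on the symbols n (x) m: a letter (true,(n,m)) is
   the generator n (x) m, a letter (false,(n,m)) is its formal inverse.
   Concatenation is the product. *)
Definition letter := (bool * (G * G))%type.
Definition word := list letter.
Definition gen (n m : G) : letter := (true, (n, m)).

Fixpoint wpow (w : word) (k : nat) : word :=
  match k with 0 => [] | S k => w ++ wpow w k end.

Definition good (N M : G -> Prop) (w : word) : Prop :=
  Forall (fun l : letter => N (fst (snd l)) /\ M (snd (snd l))) w.

(* The congruence presenting N (x) M: free group relations plus
   nn' (x) m = (^n n' (x) ^n m)(n (x) m) and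
   n (x) mm' = (n (x) m)(^m n (x) ^m m'). *)
Inductive tens_eq (N M : G -> Prop) : word -> word -> Prop :=
| te_refl w : tens_eq N M w w
| te_sym u v : tens_eq N M u v -> tens_eq N M v u
| te_trans u v w : tens_eq N M u v -> tens_eq N M v w -> tens_eq N M u w
| te_cat u u' v v' : tens_eq N M u u' -> tens_eq N M v v' ->
    tens_eq N M (u ++ v) (u' ++ v')
| te_invl x : tens_eq N M [(false, x); (true, x)] []
| te_invr x : tens_eq N M [(true, x); (false, x)] []
| te_rel1 n n' m : N n -> N n' -> M m ->
    tens_eq N M [gen (gmul n n') m] [gen (conj n n') (conj n m); gen n m]
| te_rel2 n m m' : N n -> M m -> M m' ->
    tens_eq N M [gen n (gmul m m')] [gen n m; gen (conj m n) (conj m m')].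

Definition tensor_exp_dvd (N M : G -> Prop) (d : nat) : Prop :=
  forall w, good N M w -> tens_eq N M (wpow w d) [].

End Groups.

(* Main.v *)
Require Import Defs.
From Stdlib Require Import Arith List Lia Setoid Morphisms.
Import ListNotations.
Set Implicit Arguments.

Arguments gmulA {g} x y z.
Arguments gmul1 {g} x.
Arguments gmulV {g} x.
Section GL.
Variable G : group.
Implicit Types x y z : G.
Lemma mulV x : gmul x (ginv x) = gone G.
Proof.
  rewrite <- (gmul1 (gmul x (ginv x))).
  rewrite <- (gmulV (ginv x)) at 1.
  rewrite <- gmulA. rewrite (gmulA (ginv x) x). rewrite gmulV, gmul1. apply gmulV.
Qed.
Lemma mul1r x : gmul x (gone G) = x.
Proof. rewrite <- (gmulV x), gmulA, mulV, gmul1. reflexivity. Qed.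
Lemma mulKV x y : gmul (ginv x) (gmul x y) = y.
Proof. rewrite gmulA, gmulV, gmul1; reflexivity. Qed.
Lemma mulVK x y : gmul x (gmul (ginv x) y) = y.
Proof. rewrite gmulA, mulV, gmul1; reflexivity. Qed.
Lemma inv_uniq x y : gmul x y = gone G -> ginv x = y.
Proof. intro H. rewrite <- (mul1r (ginv x)), <- H, mulKV. reflexivity. Qed.
Lemma invinv x : ginv (ginv x) = x.
Proof. apply inv_uniq, gmulV. Qed.
Lemma invM x y : ginv (gmul x y) = gmul (ginv y) (ginv x).
Proof. apply inv_uniq. rewrite <- gmulA, mulVK, mulV; reflexivity. Qed.
Lemma inv1 : ginv (gone G) = gone G.
Proof. apply inv_uniq, gmul1. Qed.
End GL.
Arguments mulV {G}. Arguments mul1r {G}. Arguments mulKV {G}. Arguments mulVK {G}. Arguments inv_uniq {G}. Arguments invinv {G}. Arguments invM {G}.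


Hint Rewrite <- @gmulA : gs.
Hint Rewrite @gmul1 @mul1r @gmulV @mulV @mulKV @mulVK @invinv @invM @inv1 : gs.
Ltac gsimpl := unfold conj in *; autorewrite with gs in *.

Section GL2.
Variable G : group.
Implicit Types x y z : G.
Lemma conj_mul x y h : conj (gmul x y) h = conj x (conj y h).
Proof. gsimpl; reflexivity. Qed.
Lemma conj1 h : conj (gone G) h = h.
Proof. gsimpl; reflexivity. Qed.
Lemma conjM x a b : conj x (gmul a b) = gmul (conj x a) (conj x b).
Proof. gsimpl; reflexivity. Qed.
Lemma conjJ x a b : conj x (conj a b) = conj (conj x a) (conj x b).
Proof. gsimpl; reflexivity. Qed.
Lemma conj_c x y : gmul x y = gmul y x -> conj x y = y.
Proof. intro H. unfold conj. rewrite H. gsimpl. reflexivity. Qed.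
Lemma gpow_add x a b : gpow x (a + b) = gmul (gpow x a) (gpow x b).
Proof. induction a; simpl. - now rewrite gmul1. - rewrite IHa. now rewrite gmulA. Qed.
Lemma gpow_one k : gpow (gone G) k = gone G.
Proof. induction k; simpl; [reflexivity| rewrite IHk; apply gmul1]. Qed.
Lemma gpow_mul x a b : gpow x (a * b) = gpow (gpow x a) b.
Proof.
  induction b; simpl.
  - now rewrite Nat.mul_0_r.
  - rewrite Nat.mul_succ_r, Nat.add_comm, gpow_add, IHb. reflexivity.
Qed.
Lemma gpow_comm x k : gmul (gpow x k) x = gmul x (gpow x k).
Proof.
  induction k; simpl. - now rewrite gmul1, mul1r.
  - rewrite <- gmulA, IHk. reflexivity.
Qed.
End GL2.
Arguments conj_mul {G}. Arguments conj1 {G}. Arguments conjM {G}. Arguments conjJ {G}. Arguments conj_c {G}.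
Arguments gpow_add {G}. Arguments gpow_one {G}. Arguments gpow_mul {G}. Arguments gpow_comm {G}.


Section T.
Variable G : group.
Variables N M : G -> Prop.
Hypothesis hN : normal N.
Hypothesis hM : normal M.
Hypothesis hA : abelian N.

Notation "u ~ v" := (tens_eq N M u v) (at level 70).

#[local] Instance te_equiv : Equivalence (tens_eq N M).
Proof. split; red; [apply te_refl | apply te_sym | apply te_trans]. Qed.
#[local] Instance te_app : Proper (tens_eq N M ==> tens_eq N M ==> tens_eq N M) (@app (@letter G)).
Proof. intros u u' H v v' H'. now apply te_cat. Qed.
#[local] Instance te_cons : Proper (eq ==> tens_eq N M ==> tens_eq N M) (@cons (@letter G)).
Proof. intros l l' <- v v' H'. change (l :: v) with ([l] ++ v). change (l :: v') with ([l] ++ v'). now apply te_cat. Qed.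

Lemma N1 : N (gone G). Proof. apply hN. Qed.
Lemma NM x y : N x -> N y -> N (gmul x y). Proof. apply hN. Qed.
Lemma NV x : N x -> N (ginv x). Proof. apply hN. Qed.
Lemma NJ g x : N x -> N (conj g x). Proof. apply hN. Qed.
Lemma M1 : M (gone G). Proof. apply hM. Qed.
Lemma MM x y : M x -> M y -> M (gmul x y). Proof. apply hM. Qed.
Lemma MV x : M x -> M (ginv x). Proof. apply hM. Qed.
Lemma MJ g x : M x -> M (conj g x). Proof. apply hM. Qed.
Hint Resolve N1 NM NV NJ M1 MM MV MJ : grp.

Definition invl (l : @letter G) : letter := (negb (fst l), snd l).
Definition winv (w : @word G) : word := rev (map invl w).
Definition conjL (x : G) (l : @letter G) : letter :=
  (fst l, (conj x (fst (snd l)), conj x (snd (snd l)))).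
Definition conjw x (w : @word G) : word := map (conjL x) w.
Definition comm (n m : G) : G := gmul (conj n m) (ginv m).
Definition lamL (l : @letter G) : G :=
  if fst l then comm (fst (snd l)) (snd (snd l)) else ginv (comm (fst (snd l)) (snd (snd l))).
Definition lam (w : @word G) : G := fold_right (fun l acc => gmul (lamL l) acc) (gone G) w.

Lemma canc1 l : [l; invl l] ~ [].
Proof. destruct l as [[|] x]; simpl; [apply te_invr|apply te_invl]. Qed.
Lemma canc2 l : [invl l; l] ~ [].
Proof. destruct l as [[|] x]; simpl; [apply te_invl|apply te_invr]. Qed.

Lemma winv_r w : w ++ winv w ~ [].
Proof.
  induction w as [|l w IH]; simpl. reflexivity.
  unfold winv in *; simpl. rewrite app_assoc.
  rewrite IH. simpl. apply canc1.
Qed.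
Lemma winv_l w : winv w ++ w ~ [].
Proof.
  induction w as [|l w IH]; simpl. reflexivity.
  unfold winv in *; simpl. rewrite <- app_assoc.
  change ([invl l] ++ l :: w) with ([invl l; l] ++ w).
  rewrite canc2. simpl. exact IH.
Qed.
Lemma cancel_l u v v' : u ++ v ~ u ++ v' -> v ~ v'.
Proof.
  intro H. transitivity ((winv u ++ u) ++ v). { rewrite winv_l. reflexivity. }
  rewrite <- app_assoc, H, app_assoc, winv_l. reflexivity.
Qed.
Lemma cancel_r u v v' : v ++ u ~ v' ++ u -> v ~ v'.
Proof.
  intro H. transitivity (v ++ (u ++ winv u)). { rewrite winv_r, app_nil_r. reflexivity. }
  rewrite app_assoc, H, <- app_assoc, winv_r, app_nil_r. reflexivity.
Qed.

Lemma good_app u v : good N M u -> good N M v -> good N M (u ++ v).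
Proof. intros; apply Forall_app; auto. Qed.
Lemma good_winv u : good N M u -> good N M (winv u).
Proof.
  intro H. unfold winv. apply Forall_rev. apply Forall_map.
  eapply Forall_impl; [|exact H]. intros [b [n m]]; simpl; auto.
Qed.
Lemma good_conjw x u : good N M u -> good N M (conjw x u).
Proof.
  intro H. apply Forall_map.
  eapply Forall_impl; [|exact H]. intros [b [n m]]; simpl; intuition auto with grp.
Qed.
Lemma good_wpow u k : good N M u -> good N M (wpow u k).
Proof. intro H; induction k; simpl. constructor. now apply good_app. Qed.
Hint Resolve good_app good_winv good_conjw good_wpow : grp.

Lemma conjw_resp x u v : u ~ v -> conjw x u ~ conjw x v.
Proof.
  induction 1; unfold conjw in *; simpl.
  - reflexivity.
  - now symmetry.
  - etransitivity; eauto.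
  - rewrite !map_app. now apply te_cat.
  - apply te_invl.
  - apply te_invr.
  - unfold gen, conjL; simpl. rewrite conjM, (conjJ x n n'), (conjJ x n m).
    apply te_rel1; auto with grp.
  - unfold gen, conjL; simpl. rewrite conjM, (conjJ x m n), (conjJ x m m').
    apply te_rel2; auto with grp.
Qed.
#[local] Instance conjw_proper x : Proper (tens_eq N M ==> tens_eq N M) (conjw x).
Proof. intros u v H; now apply conjw_resp. Qed.

Lemma conjw_mul x y w : conjw (gmul x y) w = conjw x (conjw y w).
Proof. unfold conjw. rewrite map_map. apply map_ext. intros [b [n m]]; unfold conjL; simpl. now rewrite !conj_mul. Qed.
Lemma conjw_1 w : conjw (gone G) w = w.
Proof. unfold conjw. rewrite <- map_id. apply map_ext. intros [b [n m]]; unfold conjL; simpl. now rewrite !conj1. Qed.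
Lemma conjw_app x u v : conjw x (u ++ v) = conjw x u ++ conjw x v.
Proof. apply map_app. Qed.

Lemma lam_app u v : lam (u ++ v) = gmul (lam u) (lam v).
Proof. induction u; simpl. now rewrite gmul1. rewrite IHu. apply gmulA. Qed.

Lemma lam_resp u v : u ~ v -> lam u = lam v.
Proof.
  induction 1; simpl.
  - reflexivity.
  - auto.
  - congruence.
  - rewrite !lam_app. congruence.
  - unfold lamL; simpl. gsimpl. reflexivity.
  - unfold lamL; simpl. gsimpl. reflexivity.
  - unfold lamL, comm; simpl. gsimpl. reflexivity.
  - unfold lamL, comm; simpl. gsimpl. reflexivity.
Qed.

Lemma comm_N n m : N n -> M m -> N (comm n m).
Proof.
  intros Hn Hm. replace (comm n m) with (gmul n (conj m (ginv n))).
  auto with grp. unfold comm; gsimpl; reflexivity.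
Qed.
Lemma comm_M n m : N n -> M m -> M (comm n m).
Proof. intros Hn Hm. unfold comm. auto with grp. Qed.
Hint Resolve comm_N comm_M : grp.

Lemma lam_N w : good N M w -> N (lam w).
Proof.
  induction 1 as [|[b [n m]] w [Hn Hm] Hw IH]; simpl in *. auto with grp.
  unfold lamL; destruct b; simpl; auto with grp.
Qed.

Lemma lam_winv w : lam (winv w) = ginv (lam w).
Proof.
  induction w as [|l w IH]. simpl. now rewrite inv1.
  unfold winv in *. simpl. rewrite lam_app, IH. simpl.
  destruct l as [[|] [n m]]; unfold lamL; simpl; gsimpl; reflexivity.
Qed.

Lemma lam_wpow w k : lam (wpow w k) = gpow (lam w) k.
Proof. induction k; simpl. reflexivity. now rewrite lam_app, IHk. Qed.

Lemma CM n n' m m' : N n -> N n' -> M m -> M m' ->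
  [gen (conj (gmul n m) n') (conj (gmul n m) m'); gen n m] ~
  [gen n m; gen (conj (gmul m n) n') (conj (gmul m n) m')].
Proof.
  intros Hn Hn' Hm Hm'.
  set (X := [gen (gmul n n') (gmul m m')]).
  assert (W1 : X ~ [gen (conj n n') (conj n m);
                    gen (conj (gmul n m) n') (conj (gmul n m) m');
                    gen n m; gen (conj m n) (conj m m')]).
  { unfold X. rewrite te_rel1 by auto with grp.
    rewrite conjM.
    change [gen (conj n n') (gmul (conj n m) (conj n m')); gen n (gmul m m')]
      with ([gen (conj n n') (gmul (conj n m) (conj n m'))] ++ [gen n (gmul m m')]).
    rewrite te_rel2 by auto with grp. rewrite (te_rel2 N M n m m') by auto with grp.
    simpl. rewrite <- !conjJ, <- !conj_mul. reflexivity. }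
  assert (W2 : X ~ [gen (conj n n') (conj n m); gen n m;
                    gen (conj (gmul m n) n') (conj (gmul m n) m');
                    gen (conj m n) (conj m m')]).
  { unfold X. rewrite te_rel2 by auto with grp.
    rewrite conjM.
    change [gen (gmul n n') m; gen (gmul (conj m n) (conj m n')) (conj m m')]
      with ([gen (gmul n n') m] ++ [gen (gmul (conj m n) (conj m n')) (conj m m')]).
    rewrite te_rel1 by auto with grp. rewrite (te_rel1 N M (conj m n)) by auto with grp.
    simpl. rewrite <- !conjJ, <- !conj_mul. reflexivity. }
  rewrite W1 in W2.
  apply (cancel_l [gen (conj n n') (conj n m)]).
  apply (cancel_r [gen (conj m n) (conj m m')]). simpl. exact W2.
Qed.

Lemma CM_letter n m l : N n -> M m -> N (fst (snd l)) -> M (snd (snd l)) ->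
  [gen n m; l] ~ [conjL (comm n m) l; gen n m].
Proof.
  intros Hn Hm Hn' Hm'. destruct l as [b [n' m']]; simpl in *.
  set (y := ginv (gmul m n)).
  assert (E1 : forall h, conj (gmul m n) (conj y h) = h) by (intro; unfold y; gsimpl; reflexivity).
  assert (E2 : forall h, conj (gmul n m) (conj y h) = conj (comm n m) h)
    by (intro; unfold y, comm; gsimpl; reflexivity).
  pose proof (CM Hn (NJ y Hn') Hm (MJ y Hm')) as H.
  rewrite !E1, !E2 in H.
  destruct b; unfold conjL; simpl.
  - symmetry. exact H.
  - set (g := gen n m) in *. set (p := (n', m')).
    set (p' := (conj (comm n m) n', conj (comm n m) m')).
    change (gen (conj (comm n m) n') (conj (comm n m) m')) with ((true, p')) in H.
    change (gen n' m') with ((true, p)) in H.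
    transitivity ([(false,p')] ++ [(true,p')] ++ [g] ++ [(false,p)]).
    + change ([(false,p')] ++ [(true,p')] ++ [g] ++ [(false,p)]) with ([(false,p'); (true,p')] ++ [g; (false,p)]).
      rewrite te_invl. reflexivity.
    + change ([(true,p')] ++ [g] ++ [(false,p)]) with ([(true,p'); g] ++ [(false,p)]).
      rewrite H. simpl. change [(false, p'); g; (true, p); (false, p)] with ([(false, p'); g] ++ [(true, p); (false, p)]).
      rewrite te_invr. rewrite app_nil_r. reflexivity.
Qed.

Lemma CM_gen n m z : N n -> M m -> good N M z ->
  [gen n m] ++ z ~ conjw (comm n m) z ++ [gen n m].
Proof.
  intros Hn Hm Hz. induction Hz as [|l z [Hl1 Hl2] Hz IH]; simpl. reflexivity.
  change (gen n m :: l :: z) with ([gen n m; l] ++ z).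
  rewrite CM_letter by auto. simpl. rewrite <- IH. reflexivity.
Qed.

Lemma CM_lett l z : N (fst (snd l)) -> M (snd (snd l)) -> good N M z ->
  [l] ++ z ~ conjw (lamL l) z ++ [l].
Proof.
  destruct l as [[|] [n m]]; simpl; intros Hn Hm Hz.
  - apply CM_gen; auto.
  - set (c := comm n m). set (Z := conjw (ginv c) z).
    assert (HZ : [gen n m] ++ Z ~ z ++ [gen n m]).
    { rewrite CM_gen by (unfold Z; auto with grp). unfold Z. rewrite <- conjw_mul.
      fold c. rewrite mulV, conjw_1. reflexivity. }
    transitivity ([(false,(n,m))] ++ z ++ [gen n m] ++ [(false,(n,m))]).
    + change ([gen n m] ++ [(false,(n,m))]) with [(true,(n,m)); (false,(n,m))].
      rewrite te_invr. rewrite app_nil_r. reflexivity.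
    + rewrite (app_assoc z), <- HZ. rewrite !app_assoc.
      change ([(false, (n, m))] ++ [gen n m]) with [(false,(n,m)); (true,(n,m))].
      rewrite te_invl. reflexivity.
Qed.

Lemma CM_word t z : good N M t -> good N M z -> t ++ z ~ conjw (lam t) z ++ t.
Proof.
  intros Ht Hz. induction Ht as [|l t [Hl1 Hl2] Ht IH]; simpl.
  - rewrite conjw_1, app_nil_r. reflexivity.
  - change (l :: t ++ z) with ([l] ++ (t ++ z)). rewrite IH.
    rewrite app_assoc, CM_lett by auto with grp.
    rewrite conjw_mul. rewrite <- app_assoc. reflexivity.
Qed.

Lemma central t z : good N M t -> good N M z -> lam t = gone G -> t ++ z ~ z ++ t.
Proof. intros Ht Hz E. rewrite CM_word by auto. rewrite E, conjw_1. reflexivity. Qed.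

Lemma wpow_add (w : @word G) a b : wpow w (a + b) = wpow w a ++ wpow w b.
Proof. induction a; simpl. reflexivity. rewrite IHa. apply app_assoc. Qed.
Lemma wpow_comm (w : @word G) k : wpow w k ++ w = w ++ wpow w k.
Proof. induction k; simpl. now rewrite app_nil_r. rewrite <- app_assoc, IHk. reflexivity. Qed.
Lemma wpow_nil k : wpow (@nil (@letter G)) k = [].
Proof. induction k; simpl; auto. Qed.
Lemma wpow_triv (w : @word G) e q : wpow w e ~ [] -> wpow w (q * e) ~ [].
Proof. intro H. induction q; simpl. reflexivity. rewrite wpow_add, H, IHq. reflexivity. Qed.

Fixpoint tri k := match k with 0 => 0 | S k => k + tri k end.
Lemma tri2 k : 2 * tri k = k * (k - 1).
Proof. induction k; simpl. reflexivity. destruct k; simpl in *; nia. Qed.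

Variable e : nat.
Hypothesis he : kills N e.

Lemma pow_central a z : good N M a -> good N M z -> wpow a e ++ z ~ z ++ wpow a e.
Proof.
  intros Ha Hz. apply central; auto with grp.
  rewrite lam_wpow. apply he. now apply lam_N.
Qed.

Section C2.
Variables a b : @word G.
Hypothesis Ha : good N M a.
Hypothesis Hb : good N M b.
Let c := winv b ++ winv a ++ b ++ a.
Lemma c_good : good N M c. Proof. unfold c; auto 10 with grp. Qed.
Lemma c_lam : lam c = gone G.
Proof.
  unfold c. rewrite !lam_app, !lam_winv.
  rewrite (hA (lam_N Hb) (lam_N Ha)).
  gsimpl; reflexivity.
Qed.
Lemma c_cent z : good N M z -> c ++ z ~ z ++ c.
Proof. intro; apply central; auto using c_good, c_lam. Qed.
Lemma ba : b ++ a ~ a ++ b ++ c.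
Proof.
  unfold c. rewrite (app_assoc b (winv b)), winv_r. simpl.
  rewrite (app_assoc a (winv a)), winv_r. simpl. reflexivity.
Qed.
Lemma L1 k : b ++ wpow a k ~ wpow a k ++ b ++ wpow c k.
Proof.
  induction k; simpl. rewrite !app_nil_r. reflexivity.
  rewrite (app_assoc b a), ba, <- !app_assoc.
  rewrite (@c_cent (wpow a k)) by auto with grp.
  rewrite (app_assoc b (wpow a k) c), IHk.
  rewrite <- !app_assoc, wpow_comm. reflexivity.
Qed.
Lemma ck_cent k z : good N M z -> wpow c k ++ z ~ z ++ wpow c k.
Proof.
  intro Hz. apply central; auto using c_good with grp.
  rewrite lam_wpow, c_lam. apply gpow_one.
Qed.
Lemma L2 k : wpow (a ++ b) k ~ wpow a k ++ wpow b k ++ wpow c (tri k).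
Proof.
  induction k; simpl. reflexivity.
  rewrite IHk, wpow_add. rewrite <- !app_assoc.
  rewrite (app_assoc b (wpow a k)), L1. rewrite <- !app_assoc.
  rewrite (app_assoc (wpow c k) (wpow b k)).
  rewrite (@ck_cent k (wpow b k)) by auto with grp. rewrite <- !app_assoc. reflexivity.
Qed.
Lemma ce : wpow c e ~ [].
Proof.
  apply (cancel_l (wpow a e ++ b)). rewrite app_nil_r, <- app_assoc, <- L1.
  symmetry; apply pow_central; auto.
Qed.
End C2.

Lemma gpow_N x k : N x -> N (gpow x k).
Proof. intro; induction k; simpl; auto with grp. Qed.
Lemma gpow_M x k : M x -> M (gpow x k).
Proof. intro; induction k; simpl; auto with grp. Qed.
Hint Resolve gpow_N gpow_M : grp.

Lemma one_l m : M m -> [gen (gone G) m] ~ [].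
Proof.
  intro Hm. pose proof (te_rel1 N M (gone G) (gone G) m N1 N1 Hm) as H.
  rewrite gmul1, !conj1 in H.
  apply (cancel_r [gen (gone G) m]). simpl. symmetry; exact H.
Qed.
Lemma one_r n : N n -> [gen n (gone G)] ~ [].
Proof.
  intro Hn. pose proof (te_rel2 N M n (gone G) (gone G) Hn M1 M1) as H.
  rewrite gmul1, !conj1 in H.
  apply (cancel_r [gen n (gone G)]). simpl. symmetry; exact H.
Qed.
Lemma hom2 n d d' : N n -> N d -> M d -> N d' -> M d' ->
  [gen n d; gen n d'] ~ [gen n (gmul d d')].
Proof.
  intros. rewrite te_rel2 by auto. rewrite (conj_c d n), (conj_c d d') by auto.
  reflexivity.
Qed.

Lemma good1 n m : N n -> M m -> good N M [gen n m].
Proof. intros; constructor; [split; simpl; auto | constructor]. Qed.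

Section Gen.
Variables n m : G.
Hypothesis Hn : N n.
Hypothesis Hm : M m.
Let c := comm n m.

Lemma step k : [gen (gpow n (S k)) m] ~
   [gen n (comm (gpow n k) m)] ++ [gen (gpow n k) m] ++ [gen n m].
Proof.
  simpl. rewrite (hA Hn (gpow_N k Hn)).
  rewrite te_rel1 by auto with grp.
  rewrite (conj_c (gpow n k) n) by (apply hA; auto with grp).
  replace (conj (gpow n k) m) with (gmul (comm (gpow n k) m) m)
    by (unfold comm; gsimpl; reflexivity).
  change [gen n (gmul (comm (gpow n k) m) m); gen (gpow n k) m]
    with ([gen n (gmul (comm (gpow n k) m) m)] ++ [gen (gpow n k) m]).
  rewrite te_rel2 by auto with grp.
  assert (Ht : good N M [gen (gpow n k) m]) by (apply good1; auto with grp).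
  assert (Hz : good N M [gen n m]) by (apply good1; auto with grp).
  pose proof (CM_word Ht Hz) as H.
  simpl in H. unfold lamL in H; simpl in H. rewrite mul1r in H.
  unfold conjw, conjL in H; simpl in H.
  change [gen n (comm (gpow n k) m); gen (conj (comm (gpow n k) m) n) (conj (comm (gpow n k) m) m)]
    with ([gen n (comm (gpow n k) m)] ++ [gen (conj (comm (gpow n k) m) n) (conj (comm (gpow n k) m) m)]).
  rewrite <- app_assoc. simpl. rewrite <- H. reflexivity.
Qed.

Lemma comm_pow j : comm (gpow n j) m = gpow c j.
Proof.
  induction j; simpl.
  - unfold comm; gsimpl; reflexivity.
  - replace (comm (gmul n (gpow n j)) m) with (gmul (conj n (comm (gpow n j) m)) (comm n m))
      by (unfold comm; gsimpl; reflexivity).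
    rewrite (conj_c n) by (apply hA; auto with grp).
    rewrite IHj. apply gpow_comm.
Qed.

Lemma fk k : [gen (gpow n k) m] ~ [gen n (gpow c (tri k))] ++ wpow [gen n m] k.
Proof.
  induction k.
  - simpl. rewrite one_l, one_r by auto. reflexivity.
  - rewrite step, IHk, comm_pow. rewrite <- !app_assoc.
    rewrite (app_assoc [gen n (gpow c k)]).
    change (tri (S k)) with (k + tri k).
    change ([gen n (gpow c k)] ++ [gen n (gpow c (tri k))]) with
      [gen n (gpow c k); gen n (gpow c (tri k))].
    unfold c. rewrite hom2 by auto with grp. rewrite <- gpow_add.
    rewrite wpow_comm. reflexivity.
Qed.

Lemma ce_gen : gpow c e = gone G.
Proof. apply he. unfold c; auto with grp. Qed.

Lemma gen_odd : Nat.Odd e -> wpow [gen n m] e ~ [].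
Proof.
  intros [q Hq].
  pose proof (fk e) as H. rewrite (he Hn), one_l in H by auto.
  assert (T : tri e = e * q) by (pose proof (tri2 e); nia).
  rewrite T, gpow_mul, ce_gen, gpow_one, one_r in H by auto.
  symmetry; exact H.
Qed.

Lemma gen_even : Nat.Even e -> wpow [gen n m] (2 * e) ~ [].
Proof.
  intros [q Hq].
  pose proof (fk e) as H. rewrite (he Hn), one_l in H by auto.
  set (P := [gen n (gpow c (tri e))]) in H.
  assert (PP : P ++ P ~ []).
  { unfold P. simpl. rewrite hom2 by (unfold c; auto with grp). rewrite <- gpow_add.
    assert (T : tri e + tri e = e * (e - 1)) by (pose proof (tri2 e); nia).
    rewrite T, gpow_mul, ce_gen, gpow_one, one_r by auto. reflexivity. }
  replace (2 * e) with (e + e) by lia. rewrite wpow_add.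
  transitivity ((P ++ P) ++ wpow [gen n m] e ++ wpow [gen n m] e).
  { rewrite PP. reflexivity. }
  rewrite <- app_assoc, (app_assoc P (wpow [gen n m] e)), <- H. simpl. symmetry; exact H.
Qed.
End Gen.

Lemma winv_pow (w : @word G) k : wpow (winv w) k ++ wpow w k ~ [].
Proof.
  induction k; simpl. reflexivity.
  rewrite <- (wpow_comm w k). rewrite <- !app_assoc, (app_assoc (wpow (winv w) k)), IHk.
  simpl. apply winv_l.
Qed.

Lemma main_pow E : (forall n m, N n -> M m -> wpow [gen n m] E ~ []) ->
  (exists q, tri E = q * e) -> forall w, good N M w -> wpow w E ~ [].
Proof.
  intros HL [q Hq] w Hw. induction Hw as [|l w [Hl1 Hl2] Hw IH].
  - rewrite wpow_nil. reflexivity.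
  - assert (Hl : good N M [l]) by (constructor; auto).
    change (l :: w) with ([l] ++ w).
    rewrite (L2 Hl Hw), IH, Hq, wpow_triv by (apply ce; auto).
    rewrite !app_nil_r.
    destruct l as [[|] [n m]]; simpl in Hl1, Hl2.
    + apply HL; auto.
    + pose proof (winv_pow [(true,(n,m))] E) as W. simpl in W.
      change (rev [] ++ [(false,(n,m))]) with [(false,(n,m))] in W.
      rewrite (HL n m Hl1 Hl2), app_nil_r in W. exact W.
Qed.
End T.

Theorem lemma4p2 (G : group) (N M : G -> Prop) (e : nat) :
  normal N -> normal M -> abelian N -> exponent N e ->
  (Nat.Odd e -> tensor_exp_dvd N M e) /\
  (Nat.Even e -> tensor_exp_dvd N M (2 * e)).
Proof.
  intros hN hM hA [he0 [he _]]. split.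
  - intros Ho w Hw. eapply (main_pow hN hM hA he); [| |exact Hw].
    + intros n m Hn Hm. eapply gen_odd; eauto.
    + destruct Ho as [q Hq]. exists q. pose proof (tri2 e). nia.
  - intros Hv w Hw. eapply (main_pow hN hM hA he); [| |exact Hw].
    + intros n m Hn Hm. eapply gen_even; eauto.
    + exists (2 * e - 1). pose proof (tri2 (2 * e)). nia.
Qed.
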